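(* Let $X$ be a perfectly normal space and let $E\subseteq X$ be a subspace which is equiconnected. Suppose $E=\bigcup_{n=1}^\infty E_n$ where: (1) $E_n\cap E_m=\emptyset$ for $n\ne m$; (2) each $E_n$ is an ambiguous set in $E$; (3) each $E_n$ is a $B_1$-retract of $X$; (4) $E$ is a $G_\delta$-set in $X$. Then $E$ is a $B_1$-retract of $X$.
   Context: A function $f:X\to Y$ between topological spaces is a Baire-one function if it is the pointwise limit of a sequence of continuous functions $f_n:X\to Y$. A subset $E$ of $X$ (with the subspace topology) is a $B_1$-retract of $X$ if there exists a Baire-one function $r:X\to E$ with $r(x)=x$ for all $x\in E$. A subset of a topological space is ambiguous if it is simultaneously an $F_\sigma$-set and a $G_\delta$-set. A space is perfectly normal if it is normal and every closed subset is a $G_\delta$-set. A topological space $Y$ is equiconnected if there is a continuous $\gamma:Y\times Y\times[0,1]\to Y$ with $\gamma(y',y'',0)=y'$, $\gamma(y',y'',1)=y''$ and $\gamma(y',y',t)=y'$ for all $y',y''\in Y$, $t\in[0,1]$. *)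

(* Defs.v *)
From Stdlib Require Import Reals Lra Classical.
Open Scope R_scope.
Set Implicit Arguments.

Record topology (X : Type) := Topology {
  is_open : (X -> Prop) -> Prop;
  open_full : is_open (fun _ => True);
  open_inter : forall U V, is_open U -> is_open V -> is_open (fun x => U x /\ V x);
  open_union : forall (F : (X -> Prop) -> Prop),
      (forall U, F U -> is_open U) -> is_open (fun x => exists U, F U /\ U x)
}.

Definition subspace_open {X : Type} (T : topology X) (A : X -> Prop)
  (V : {x | A x} -> Prop) : Prop :=
  exists U, is_open T U /\ forall a, V a <-> U (proj1_sig a).

Definition subspace {X : Type} (T : topology X) (A : X -> Prop) : topology {x | A x}.
Proof.
  refine (@Topology _ (subspace_open T A) _ _ _).
  - exists (fun _ => True); split; [apply open_full | tauto].
  - intros U V [U' [HU' EU]] [V' [HV' EV]].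
    exists (fun x => U' x /\ V' x); split; [apply open_inter; auto |].
    intro a; rewrite EU, EV; tauto.
  - intros F HF.
    exists (fun x => exists U, (is_open T U /\ exists V, F V /\ forall a, V a <-> U (proj1_sig a)) /\ U x).
    split.
    + apply open_union; intros U [HU _]; exact HU.
    + intro a; split.
      * intros [V [HV Va]]. destruct (HF V HV) as [U [HU EU]].
        exists U; split; [split; [exact HU | exists V; auto] | apply EU; exact Va].
      * intros [U [[HU [V [HV EV]]] Ua]]. exists V; split; [exact HV | apply EV; exact Ua].
Defined.

Definition prod_open {A B : Type} (TA : topology A) (TB : topology B)
  (W : A * B -> Prop) : Prop :=
  forall p, W p -> exists U V, is_open TA U /\ is_open TB V /\ U (fst p) /\ V (snd p) /\
    forall q, U (fst q) -> V (snd q) -> W q.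

Definition prod_top {A B : Type} (TA : topology A) (TB : topology B) : topology (A * B).
Proof.
  refine (@Topology _ (prod_open TA TB) _ _ _).
  - intros p _. exists (fun _ => True), (fun _ => True).
    repeat split; try apply open_full; auto.
  - intros W1 W2 H1 H2 p [p1 p2].
    destruct (H1 p p1) as [U1 [V1 [? [? [? [? K1]]]]]].
    destruct (H2 p p2) as [U2 [V2 [? [? [? [? K2]]]]]].
    exists (fun x => U1 x /\ U2 x), (fun y => V1 y /\ V2 y).
    split; [apply open_inter; auto|]. split; [apply open_inter; auto|].
    split; [split; auto|]. split; [split; auto|].
    intros q0 [] []; split; auto.
  - intros F HF p [W [FW Wp]].
    destruct (HF W FW p Wp) as [U [V [? [? [? [? K]]]]]].
    exists U, V; repeat split; auto. intros q Uq Vq; exists W; auto.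
Defined.

Definition R_open (U : R -> Prop) : Prop :=
  forall x, U x -> exists eps, 0 < eps /\ forall y, Rabs (y - x) < eps -> U y.

Definition R_top : topology R.
Proof.
  refine (@Topology _ R_open _ _ _).
  - intros x _; exists 1; split; [lra | auto].
  - intros U V HU HV x [Ux Vx].
    destruct (HU x Ux) as [e1 [He1 K1]]. destruct (HV x Vx) as [e2 [He2 K2]].
    exists (Rmin e1 e2); split; [apply Rmin_glb_lt; auto |].
    intros y Hy; split; [apply K1 | apply K2];
      eapply Rlt_le_trans; eauto; [apply Rmin_l | apply Rmin_r].
  - intros F HF x [U [FU Ux]].
    destruct (HF U FU x Ux) as [e [He K]]. exists e; split; auto.
    intros y Hy; exists U; auto.
Defined.

Definition unit_interval : Type := {t : R | 0 <= t <= 1}.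
Definition I_top : topology unit_interval := subspace R_top (fun t => 0 <= t <= 1).

Definition continuous {X Y : Type} (TX : topology X) (TY : topology Y) (f : X -> Y) : Prop :=
  forall V, is_open TY V -> is_open TX (fun x => V (f x)).

Definition seq_converges {Y : Type} (TY : topology Y) (u : nat -> Y) (y : Y) : Prop :=
  forall V, is_open TY V -> V y -> exists N, forall n, (N <= n)%nat -> V (u n).

Definition baire_one {X Y : Type} (TX : topology X) (TY : topology Y) (f : X -> Y) : Prop :=
  exists fn : nat -> X -> Y,
    (forall n, continuous TX TY (fn n)) /\
    forall x, seq_converges TY (fun n => fn n x) (f x).

Definition B1_retract {X : Type} (TX : topology X) (E : X -> Prop) : Prop :=
  exists r : X -> {x | E x},
    baire_one TX (subspace TX E) r /\ forall e : {x | E x}, r (proj1_sig e) = e.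

Definition closed {X : Type} (T : topology X) (A : X -> Prop) : Prop :=
  is_open T (fun x => ~ A x).

Definition F_sigma {X : Type} (T : topology X) (A : X -> Prop) : Prop :=
  exists F : nat -> X -> Prop,
    (forall k, closed T (F k)) /\ forall x, A x <-> exists k, F k x.

Definition G_delta {X : Type} (T : topology X) (A : X -> Prop) : Prop :=
  exists G : nat -> X -> Prop,
    (forall k, is_open T (G k)) /\ forall x, A x <-> forall k, G k x.

Definition ambiguous {X : Type} (T : topology X) (A : X -> Prop) : Prop :=
  F_sigma T A /\ G_delta T A.

(** Normal and perfectly normal spaces (no separation axiom T1 built in). *)
Definition normal {X : Type} (T : topology X) : Prop :=
  forall A B, closed T A -> closed T B -> (forall x, ~ (A x /\ B x)) ->
    exists U V, is_open T U /\ is_open T V /\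
      (forall x, A x -> U x) /\ (forall x, B x -> V x) /\
      (forall x, ~ (U x /\ V x)).

Definition perfectly_normal {X : Type} (T : topology X) : Prop :=
  normal T /\ forall A, closed T A -> G_delta T A.

Definition equiconnected {Y : Type} (TY : topology Y) : Prop :=
  exists g : Y * Y * unit_interval -> Y,
    continuous (prod_top (prod_top TY TY) I_top) TY g /\
    forall (y1 y2 : Y) (t : unit_interval),
      (proj1_sig t = 0 -> g (y1, y2, t) = y1) /\
      (proj1_sig t = 1 -> g (y1, y2, t) = y2) /\
      g (y1, y1, t) = y1.

(* Main.v *)
Require Import Defs.
From Stdlib Require Import Reals Classical Lra Lia.
From Stdlib Require Import ProofIrrelevance FunctionalExtensionality PropExtensionality ClassicalEpsilon.
From Stdlib Require Cantor.

Lemma open_ext {X} (T : topology X) (U V : X -> Prop) :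
  (forall x, U x <-> V x) -> is_open T U -> is_open T V.
Proof.
  intros H HU. replace V with U; auto.
  apply functional_extensionality; intro x; apply propositional_extensionality; auto.
Qed.

Lemma open_local {X} (T : topology X) (W : X -> Prop) :
  (forall x, W x -> exists N, is_open T N /\ N x /\ forall y, N y -> W y) -> is_open T W.
Proof.
  intro H.
  apply open_ext with (fun x => exists U, (is_open T U /\ forall y, U y -> W y) /\ U x).
  - intro x; split.
    + intros [U [[_ HU] Ux]]; auto.
    + intro Wx; destruct (H x Wx) as [N [HN [Nx HNW]]]; exists N; auto.
  - apply (open_union T (fun U => is_open T U /\ forall y, U y -> W y)); tauto.
Qed.

Lemma open_union2 {X} (T : topology X) U V :
  is_open T U -> is_open T V -> is_open T (fun x => U x \/ V x).
Proof.
  intros HU HV. apply open_ext with (fun x => exists W, (W = U \/ W = V) /\ W x).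
  - intro x; split.
    + intros [W [[-> | ->] Wx]]; auto.
    + intros [Ux | Vx]; [exists U | exists V]; auto.
  - apply open_union; intros W [-> | ->]; auto.
Qed.

Lemma closed_union2 {X} (T : topology X) A B :
  closed T A -> closed T B -> closed T (fun x => A x \/ B x).
Proof.
  unfold closed; intros HA HB. apply open_ext with (fun x => ~ A x /\ ~ B x).
  - intro; tauto.
  - apply open_inter; auto.
Qed.

Lemma closed_inter2 {X} (T : topology X) A B :
  closed T A -> closed T B -> closed T (fun x => A x /\ B x).
Proof.
  unfold closed; intros HA HB. apply open_ext with (fun x => ~ A x \/ ~ B x).
  - intro; tauto.
  - apply open_union2; auto.
Qed.

Lemma closed_empty {X} (T : topology X) : closed T (fun _ => False).
Proof. unfold closed. apply open_ext with (fun _ => True). tauto. apply open_full. Qed.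

Lemma closed_full {X} (T : topology X) : closed T (fun _ => True).
Proof. unfold closed. apply open_ext with (fun x => exists U, False /\ U x).
  - intro; split; [intros [U [[] _]] | intro H; exfalso; apply H; exact I].
  - apply (open_union T (fun _ => False)); tauto.
Qed.

Lemma closed_fin_union {X} (T : topology X) (P : nat -> X -> Prop) :
  (forall j, closed T (P j)) -> forall k, closed T (fun x => exists j, (j < k)%nat /\ P j x).
Proof.
  intros HP k; induction k.
  - eapply open_ext; [| apply (closed_empty T)]. intro x; split; [|tauto].
    intros H [j [Hj _]]; lia.
  - unfold closed. eapply open_ext; [| apply (closed_union2 T _ _ IHk (HP k))].
    intro x; split.
    + intros H1 H2; apply H1. destruct H2 as [j [Hj Pj]]. destruct (Nat.eq_dec j k) as [-> | Hne]; [right; auto|].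
      left; exists j; split; [lia|auto].
    + intros H1 H2; apply H1. destruct H2 as [[j [Hj Pj]] | Pk].
      * exists j; split; [lia|auto].
      * exists k; split; [lia|auto].
Qed.

Lemma open_compl {X} (T : topology X) U : is_open T U -> closed T (fun x => ~ U x).
Proof. unfold closed; intro H; eapply open_ext; [| apply H]. intro x; split; [tauto|apply NNPP]. Qed.

Lemma cont_comp {X Y Z} (TX : topology X) (TY : topology Y) (TZ : topology Z) f g :
  continuous TX TY f -> continuous TY TZ g -> continuous TX TZ (fun x => g (f x)).
Proof. unfold continuous; intros Hf Hg V HV. apply (Hf _ (Hg V HV)). Qed.

Lemma cont_pair {X A B} (TX : topology X) (TA : topology A) (TB : topology B) f g :
  continuous TX TA f -> continuous TX TB g ->
  continuous TX (prod_top TA TB) (fun x => (f x, g x)).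
Proof.
  intros Hf Hg W HW. apply open_local. intros x Wx.
  destruct (HW _ Wx) as [U [V [HU [HV [Ux [Vx HUV]]]]]].
  exists (fun y => U (f y) /\ V (g y)); repeat split; auto.
  - apply open_inter; [apply Hf | apply Hg]; auto.
  - intros y [Uy Vy]; apply HUV; auto.
Qed.

Lemma choice_cid {A B} (P : A -> B -> Prop) :
  (forall a, exists b, P a b) -> exists f : A -> B, forall a, P a (f a).
Proof.
  intro H. exists (fun a => proj1_sig (constructive_indefinite_description _ (H a))).
  intro a; exact (proj2_sig (constructive_indefinite_description _ (H a))).
Qed.

Lemma exists_least (P : nat -> Prop) :
  (exists k, P k) -> exists k, P k /\ forall j, (j < k)%nat -> ~ P j.
Proof.
  intros [k Pk].
  assert (H : forall m, (exists k, (k <= m)%nat /\ P k) -> exists k, P k /\ forall j, (j < k)%nat -> ~ P j).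
  { induction m.
    - intros [k0 [Hk Pk0]]. exists 0%nat; split; [replace 0%nat with k0 by lia; auto | intros; lia].
    - intros Hex. destruct (classic (exists k, (k <= m)%nat /\ P k)) as [Hy | Hn]; [auto|].
      exists (S m). destruct Hex as [k0 [Hk Pk0]]. split.
      + destruct (Nat.eq_dec k0 (S m)) as [<- | Hne]; auto. exfalso; apply Hn; exists k0; split; [lia|auto].
      + intros j Hj Pj; apply Hn; exists j; split; [lia | auto]. }
  apply (H k); exists k; auto.
Qed.

Lemma interp_ex {X} (T : topology X) (Hn : normal T) (P Q : X -> Prop) :
  exists p : (X -> Prop) * (X -> Prop),
    closed T P -> is_open T Q -> (forall x, P x -> Q x) ->
    is_open T (fst p) /\ closed T (snd p) /\ (forall x, P x -> fst p x) /\
    (forall x, fst p x -> snd p x) /\ (forall x, snd p x -> Q x).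
Proof.
  destruct (classic (closed T P /\ is_open T Q /\ forall x, P x -> Q x)) as [[HP [HQ HPQ]] | Hno].
  - destruct (Hn P (fun x => ~ Q x) HP (open_compl T Q HQ)) as [U [V [HU [HV [PU [QV UV]]]]]].
    + intros x [Px nQx]; auto.
    + exists (U, fun x => ~ V x); intros _ _ _; simpl; repeat split; auto.
      * apply open_compl; auto.
      * intros x Ux Vx; apply (UV x); auto.
      * intros x nVx; apply NNPP; intro nQ; auto.
  - exists (Q, Q); intros; exfalso; auto.
Qed.

Definition interp {X} (T : topology X) (Hn : normal T) (P Q : X -> Prop) :=
  proj1_sig (constructive_indefinite_description _ (interp_ex T Hn P Q)).

Lemma interp_spec {X} (T : topology X) (Hn : normal T) (P Q : X -> Prop) :
    closed T P -> is_open T Q -> (forall x, P x -> Q x) ->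
    is_open T (fst (interp T Hn P Q)) /\ closed T (snd (interp T Hn P Q)) /\
    (forall x, P x -> fst (interp T Hn P Q) x) /\
    (forall x, fst (interp T Hn P Q) x -> snd (interp T Hn P Q) x) /\
    (forall x, snd (interp T Hn P Q) x -> Q x).
Proof. exact (proj2_sig (constructive_indefinite_description _ (interp_ex T Hn P Q))). Qed.

Fixpoint lev {X} (T : topology X) (Hn : normal T) (A B : X -> Prop) (n : nat)
  : nat -> (X -> Prop) * (X -> Prop) :=
  match n with
  | O => fun k => match k with
      | O => interp T Hn A (fun x => ~ B x)
      | 1 => (fun x => ~ B x, fun _ => True)
      | _ => (fun _ => True, fun _ => True) end
  | S m => fun k => if Nat.even k then lev T Hn A B m (Nat.div2 k)
      else interp T Hn (snd (lev T Hn A B m (Nat.div2 k))) (fst (lev T Hn A B m (S (Nat.div2 k))))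
  end.

Lemma lev_even {X} T Hn (A B : X -> Prop) m j : lev T Hn A B (S m) (2 * j) = lev T Hn A B m j.
Proof. change (lev T Hn A B (S m) (2 * j)) with (if Nat.even (2*j) then lev T Hn A B m (Nat.div2 (2*j))
      else interp T Hn (snd (lev T Hn A B m (Nat.div2 (2*j)))) (fst (lev T Hn A B m (S (Nat.div2 (2*j)))))).
  rewrite Nat.even_even, Nat.div2_double. reflexivity. Qed.

Lemma lev_odd {X} T Hn (A B : X -> Prop) m j : lev T Hn A B (S m) (2 * j + 1) =
  interp T Hn (snd (lev T Hn A B m j)) (fst (lev T Hn A B m (S j))).
Proof. change (lev T Hn A B (S m) (2 * j + 1)) with (if Nat.even (2*j+1) then lev T Hn A B m (Nat.div2 (2*j+1))
      else interp T Hn (snd (lev T Hn A B m (Nat.div2 (2*j+1)))) (fst (lev T Hn A B m (S (Nat.div2 (2*j+1)))))).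
  rewrite Nat.even_odd, Nat.div2_odd'. reflexivity. Qed.

Definition Vl {X} T Hn (A B : X -> Prop) n k := fst (lev T Hn A B n k).
Definition Cl {X} T Hn (A B : X -> Prop) n k := snd (lev T Hn A B n k).

Definition Inv {X} (T : topology X) Hn (A B : X -> Prop) n :=
  (forall k, is_open T (Vl T Hn A B n k) /\ closed T (Cl T Hn A B n k)) /\
  (forall k x, Vl T Hn A B n k x -> Cl T Hn A B n k x) /\
  (forall k x, Cl T Hn A B n k x -> Vl T Hn A B n (S k) x) /\
  (forall x, A x -> Vl T Hn A B n 0 x) /\
  (forall k x, (k < 2 ^ n)%nat -> Cl T Hn A B n k x -> ~ B x) /\
  (forall x, Vl T Hn A B n (2 ^ n) x -> ~ B x) /\
  (forall k x, (2 ^ n <= k)%nat -> Cl T Hn A B n k x).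

Lemma Inv_all {X} (T : topology X) Hn (A B : X -> Prop) :
  closed T A -> closed T B -> (forall x, ~ (A x /\ B x)) -> forall n, Inv T Hn A B n.
Proof.
  intros HA HB HAB n. induction n.
  - assert (HI := interp_spec T Hn A (fun x => ~ B x) HA HB (fun x Ax Bx => HAB x (conj Ax Bx))).
    destruct HI as [I1 [I2 [I3 [I4 I5]]]].
    unfold Inv, Vl, Cl; simpl; repeat split.
    + destruct k as [|[|k]]; simpl; [exact I1 | exact HB | apply open_full].
    + destruct k as [|[|k]]; simpl; [exact I2 | apply closed_full | apply closed_full].
    + intros [|[|k]] x; simpl; auto.
    + intros [|[|k]] x; simpl; auto.
    + auto.
    + intros [|k] x Hk; simpl; [intros H; apply I5; auto | lia].
    + auto.
    + intros [|[|k]] x Hk; simpl; auto; lia.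
  - destruct IHn as [J1 [J2 [J3 [J4 [J5 [J6 J7]]]]]].
    assert (HI : forall j, let p := interp T Hn (Cl T Hn A B n j) (Vl T Hn A B n (S j)) in
        is_open T (fst p) /\ closed T (snd p) /\ (forall x, Cl T Hn A B n j x -> fst p x) /\
        (forall x, fst p x -> snd p x) /\ (forall x, snd p x -> Vl T Hn A B n (S j) x)).
    { intro j. apply interp_spec; [apply J1 | apply J1 | apply J3]. }
    assert (EV : forall j, Vl T Hn A B (S n) (2 * j) = Vl T Hn A B n j).
    { intro; unfold Vl; rewrite lev_even; auto. }
    assert (EC : forall j, Cl T Hn A B (S n) (2 * j) = Cl T Hn A B n j).
    { intro; unfold Cl; rewrite lev_even; auto. }
    assert (OV : forall j, Vl T Hn A B (S n) (2 * j + 1) = fst (interp T Hn (Cl T Hn A B n j) (Vl T Hn A B n (S j)))).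
    { intro; unfold Vl; rewrite lev_odd; auto. }
    assert (OC : forall j, Cl T Hn A B (S n) (2 * j + 1) = snd (interp T Hn (Cl T Hn A B n j) (Vl T Hn A B n (S j)))).
    { intro; unfold Cl; rewrite lev_odd; auto. }
    assert (P2 : (2 ^ S n = 2 * 2 ^ n)%nat) by (simpl; lia).
    unfold Inv; repeat split.
    + destruct (Nat.Even_or_Odd k) as [[j ->] | [j ->]].
      * rewrite EV; apply J1.
      * rewrite OV; apply (HI j).
    + destruct (Nat.Even_or_Odd k) as [[j ->] | [j ->]].
      * rewrite EC; apply J1.
      * rewrite OC; apply (HI j).
    + intros k x; destruct (Nat.Even_or_Odd k) as [[j ->] | [j ->]].
      * rewrite EV, EC; apply J2.
      * rewrite OV, OC; apply (HI j).
    + intros k x; destruct (Nat.Even_or_Odd k) as [[j ->] | [j ->]].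
      * rewrite EC. replace (S (2 * j)) with (2 * j + 1)%nat by lia. rewrite OV. apply (HI j).
      * rewrite OC. replace (S (2 * j + 1)) with (2 * S j)%nat by lia. rewrite EV. apply (HI j).
    + intros x Ax. replace 0%nat with (2 * 0)%nat by lia. rewrite EV; auto.
    + intros k x Hk; rewrite P2 in Hk; destruct (Nat.Even_or_Odd k) as [[j ->] | [j ->]].
      * rewrite EC; apply J5; lia.
      * rewrite OC; intro Hc. apply (HI j) in Hc.
        destruct (Nat.eq_dec (S j) (2 ^ n)) as [He | Hne].
        -- rewrite He in Hc; apply J6; auto.
        -- apply (J5 (S j)); [lia | apply J2; auto].
    + intros x; rewrite P2, EV; apply J6.
    + intros k x Hk; rewrite P2 in Hk; destruct (Nat.Even_or_Odd k) as [[j ->] | [j ->]].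
      * rewrite EC; apply J7; lia.
      * rewrite OC. apply (HI j). apply (HI j). apply J7; lia.
Qed.

Lemma lev_scale {X} T Hn (A B : X -> Prop) : forall d n k,
  lev T Hn A B (n + d) (k * 2 ^ d) = lev T Hn A B n k.
Proof.
  induction d; intros n k.
  - rewrite Nat.add_0_r, Nat.pow_0_r, Nat.mul_1_r; auto.
  - replace (n + S d)%nat with (S (n + d)) by lia.
    replace (k * 2 ^ S d)%nat with (2 * (k * 2 ^ d))%nat by (simpl; lia).
    rewrite lev_even; auto.
Qed.

Lemma within {X} T Hn (A B : X -> Prop) n : Inv T Hn A B n ->
  forall a b x, (a <= b)%nat -> Vl T Hn A B n a x -> Cl T Hn A B n b x.
Proof.
  intros [J1 [J2 [J3 _]]] a b x Hab Ha. induction b.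
  - replace a with 0%nat in Ha by lia. auto.
  - destruct (Nat.eq_dec a (S b)) as [-> | Hne]; auto.
    apply J2, J3, IHb; lia.
Qed.

Lemma cross {X} T Hn (A B : X -> Prop) : (forall n, Inv T Hn A B n) ->
  forall m j n k x, (j * 2 ^ n <= k * 2 ^ m)%nat -> Vl T Hn A B m j x -> Cl T Hn A B n k x.
Proof.
  intros HI m j n k x Hle HV.
  unfold Vl in HV; rewrite <- (lev_scale T Hn A B n m j) in HV.
  unfold Cl; rewrite <- (lev_scale T Hn A B m n k). rewrite Nat.add_comm.
  apply (within T Hn A B (m + n) (HI _) (j * 2 ^ n)); auto.
Qed.

Definition D (n : nat) : R := INR (2 ^ n).

Lemma D_pos n : 0 < D n.
Proof. unfold D; apply lt_0_INR. apply Nat.neq_0_lt_0, Nat.pow_nonzero; lia. Qed.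

Lemma G_ineq {X} T Hn (A B : X -> Prop) : (forall n, Inv T Hn A B n) ->
  forall m j n k x, Vl T Hn A B m j x -> ~ Cl T Hn A B n k x -> INR k / D n <= INR j / D m.
Proof.
  intros HI m j n k x HV HC.
  destruct (Rle_or_lt (INR k / D n) (INR j / D m)) as [H | H]; auto. exfalso; apply HC.
  apply (cross T Hn A B HI m j); auto.
  apply Nat.lt_le_incl, INR_lt. rewrite !mult_INR. fold (D n) (D m).
  assert (Pn := D_pos n); assert (Pm := D_pos m).
  replace (INR j * D n) with ((INR j / D m) * (D m * D n)) by (field; lra).
  replace (INR k * D m) with ((INR k / D n) * (D m * D n)) by (field; lra).
  apply Rmult_lt_compat_r; [apply Rmult_lt_0_compat|]; auto.
Qed.

Lemma u_ex {X} T Hn (A B : X -> Prop) : (forall n, Inv T Hn A B n) -> forall x,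
  exists r, 0 <= r /\ (forall n k, Vl T Hn A B n k x -> r <= INR k / D n) /\
    (forall n k, ~ Cl T Hn A B n k x -> INR k / D n <= r).
Proof.
  intros HI x.
  set (S := fun r => r = 0 \/ exists n k, ~ Cl T Hn A B n k x /\ r = INR k / D n).
  assert (Hub : forall n k, Vl T Hn A B n k x -> is_upper_bound S (INR k / D n)).
  { intros n k HV r [-> | [n' [k' [HC ->]]]].
    - apply Rmult_le_pos; [apply pos_INR | left; apply Rinv_0_lt_compat, D_pos].
    - apply (G_ineq T Hn A B HI n k n' k' x); auto. }
  assert (HV2 : Vl T Hn A B 0 2 x) by (unfold Vl; simpl; exact I).
  destruct (completeness S (ex_intro _ _ (Hub _ _ HV2)) (ex_intro _ 0 (or_introl eq_refl))) as [m [Hm1 Hm2]].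
  exists m; repeat split.
  - apply Hm1; left; auto.
  - intros n k HV; apply Hm2, Hub; auto.
  - intros n k HC; apply Hm1; right; exists n, k; auto.
Qed.

Lemma arch2 eps : 0 < eps -> exists n, 2 / D n < eps.
Proof.
  intro He. destruct (archimed_cor1 (eps / 2)) as [N [HN HN0]]; [lra|].
  exists N. assert (HD : INR N <= D N).
  { unfold D; apply le_INR. apply Nat.lt_le_incl, Nat.pow_gt_lin_r; lia. }
  assert (0 < INR N) by (apply lt_0_INR; auto).
  assert (/ D N <= / INR N) by (apply Rinv_le_contravar; auto).
  unfold Rdiv; lra.
Qed.

Lemma le_of_approx a b : (forall n, a <= b + / D n) -> a <= b.
Proof.
  intro H. destruct (Rle_or_lt a b) as [|Hlt]; auto.
  destruct (arch2 (a - b)) as [n Hn]; [lra|].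
  assert (0 < / D n) by (apply Rinv_0_lt_compat, D_pos).
  specialize (H n). unfold Rdiv in Hn. lra.
Qed.

Lemma ur_cont {X} T Hn (A B : X -> Prop) (ur : X -> R) : (forall n, Inv T Hn A B n) ->
  (forall x, 0 <= ur x /\ (forall n k, Vl T Hn A B n k x -> ur x <= INR k / D n) /\
    (forall n k, ~ Cl T Hn A B n k x -> INR k / D n <= ur x)) ->
  forall x eps, 0 < eps -> exists N, is_open T N /\ N x /\ forall y, N y -> Rabs (ur y - ur x) < eps.
Proof.
  intros HI Hu x eps He.
  destruct (arch2 eps He) as [n Hn2].
  destruct (HI n) as [J1 [J2 [J3 [_ [_ [_ J7]]]]]].
  destruct (exists_least (fun k => Vl T Hn A B n k x)) as [k0 [Hk0 Hmin]].
  { exists (S (2 ^ n)); apply J3, J7; lia. }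
  assert (Pn := D_pos n).
  destruct (Hu x) as [Hx0 [Hx1 Hx2]].
  destruct (Compare_dec.le_lt_dec 2 k0) as [Hk | Hk].
  - exists (fun y => Vl T Hn A B n k0 y /\ ~ Cl T Hn A B n (k0 - 2) y). repeat split.
    + apply open_inter; apply J1.
    + auto.
    + intro HC. apply (Hmin (S (k0 - 2))); [lia | apply J3; auto].
    + intros y [Vy Cy]. destruct (Hu y) as [Hy0 [Hy1 Hy2]].
      assert (a1 := Hy1 _ _ Vy). assert (a2 := Hy2 _ _ Cy).
      assert (a3 := Hx1 _ _ Hk0).
      assert (Cx : ~ Cl T Hn A B n (k0 - 2) x).
      { intro HC. apply (Hmin (S (k0 - 2))); [lia | apply J3; auto]. }
      assert (a4 := Hx2 _ _ Cx).
      rewrite minus_INR in a2, a4 by lia.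
      replace (INR 2) with 2 in a2, a4 by (simpl; lra).
      replace ((INR k0 - 2) / D n) with (INR k0 / D n - 2 / D n) in a2, a4 by (field; lra).
      apply Rabs_def1; lra.
  - exists (Vl T Hn A B n k0). repeat split; [apply J1 | auto |].
    intros y Vy. destruct (Hu y) as [Hy0 [Hy1 Hy2]].
    assert (a1 := Hy1 _ _ Vy). assert (a3 := Hx1 _ _ Hk0).
    assert (INR k0 <= 2) by (replace 2 with (INR 2) by (simpl; lra); apply le_INR; lia).
    assert (INR k0 / D n <= 2 / D n) by (unfold Rdiv; apply Rmult_le_compat_r; [left; apply Rinv_0_lt_compat|]; auto).
    apply Rabs_def1; lra.
Qed.

Lemma urysohn {X} (T : topology X) (Hn : normal T) (A B : X -> Prop) :
  closed T A -> closed T B -> (forall x, ~ (A x /\ B x)) ->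
  exists u : X -> unit_interval, continuous T I_top u /\
    (forall x, A x -> proj1_sig (u x) = 0) /\ (forall x, B x -> proj1_sig (u x) = 1).
Proof.
  intros HA HB HAB. assert (HI := Inv_all T Hn A B HA HB HAB).
  destruct (choice_cid _ (u_ex T Hn A B HI)) as [ur Hur].
  assert (Hle1 : forall x, ur x <= 1).
  { intro x. apply le_of_approx. intro n. destruct (HI n) as [_ [_ [J3 [_ [_ [_ J7]]]]]].
    destruct (Hur x) as [_ [H1 _]].
    assert (H := H1 n (S (2 ^ n)) (J3 _ _ (J7 _ _ (le_n _)))).
    rewrite S_INR in H. fold (D n) in H. assert (Pn := D_pos n).
    replace ((D n + 1) / D n) with (1 + / D n) in H by (field; lra). auto. }
  assert (Hb : forall x, 0 <= ur x <= 1) by (intro x; split; [apply Hur | apply Hle1]).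
  exists (fun x => exist (fun t => 0 <= t <= 1) (ur x) (Hb x)). repeat split.
  - intros V HV. simpl in HV. destruct HV as [U [HU HUV]].
    apply open_ext with (fun x => U (ur x)).
    { intro x; rewrite (HUV (exist _ (ur x) (Hb x))); simpl; tauto. }
    apply open_local. intros x Ux. destruct (HU (ur x) Ux) as [e [He Hball]].
    destruct (ur_cont T Hn A B ur HI Hur x e He) as [N [HN [Nx HNy]]].
    exists N; repeat split; auto.
  - intros x Ax; simpl. destruct (HI 0%nat) as [_ [_ [_ [J4 _]]]].
    destruct (Hur x) as [H0 [H1 _]]. assert (H := H1 0%nat 0%nat (J4 x Ax)).
    simpl in H. unfold Rdiv in H; rewrite Rmult_0_l in H. lra.
  - intros x Bx; simpl. apply Rle_antisym; [apply Hle1|].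
    apply le_of_approx. intro n. destruct (HI n) as [_ [_ [_ [_ [J5 _]]]]].
    destruct (Hur x) as [_ [_ H2]].
    assert (Hp : (1 <= 2 ^ n)%nat) by (apply Nat.neq_0_lt_0, Nat.pow_nonzero; lia).
    assert (Hlt : (2 ^ n - 1 < 2 ^ n)%nat) by lia.
    assert (H := H2 n (2 ^ n - 1)%nat (fun HC => J5 _ _ Hlt HC Bx)).
    rewrite minus_INR in H by lia. fold (D n) in H. assert (Pn := D_pos n).
    replace ((D n - INR 1) / D n) with (1 - / D n) in H by (simpl; field; lra). lra.
Qed.

Lemma choice_dep {A} {B : A -> Type} (P : forall a, B a -> Prop) :
  (forall a, exists b, P a b) -> exists f : forall a, B a, forall a, P a (f a).
Proof.
  intro H. exists (fun a => proj1_sig (constructive_indefinite_description _ (H a))).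
  intro a; exact (proj2_sig (constructive_indefinite_description _ (H a))).
Qed.

Lemma merge {X Y} (TX : topology X) (Hn : normal TX) (TY : topology Y)
  (g : Y * Y * unit_interval -> Y) :
  continuous (prod_top (prod_top TY TY) I_top) TY g ->
  (forall y1 y2 t, proj1_sig t = 0 -> g (y1, y2, t) = y1) ->
  (forall y1 y2 t, proj1_sig t = 1 -> g (y1, y2, t) = y2) ->
  forall (A B : X -> Prop) phi psi, closed TX A -> closed TX B -> (forall x, ~ (A x /\ B x)) ->
  continuous TX TY phi -> continuous TX TY psi ->
  exists h, continuous TX TY h /\ (forall x, A x -> h x = phi x) /\ (forall x, B x -> h x = psi x).
Proof.
  intros Hg Hg0 Hg1 A B phi psi HA HB HAB Hphi Hpsi.
  destruct (urysohn TX Hn A B HA HB HAB) as [u [Hu [HuA HuB]]].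
  exists (fun x => g (phi x, psi x, u x)). repeat split.
  - apply (cont_comp TX (prod_top (prod_top TY TY) I_top) TY (fun x => (phi x, psi x, u x)) g); auto.
    apply cont_pair; auto. apply cont_pair; auto.
  - intros x Ax; apply Hg0; auto.
  - intros x Bx; apply Hg1; auto.
Qed.

Lemma glue_fin {X Y} (TX : topology X) (Hn : normal TX) (TY : topology Y)
  (g : Y * Y * unit_interval -> Y) :
  continuous (prod_top (prod_top TY TY) I_top) TY g ->
  (forall y1 y2 t, proj1_sig t = 0 -> g (y1, y2, t) = y1) ->
  (forall y1 y2 t, proj1_sig t = 1 -> g (y1, y2, t) = y2) ->
  forall (M : nat -> X -> Prop) (h : nat -> X -> Y),
  (forall i, closed TX (M i)) -> (forall i j x, i <> j -> M i x -> M j x -> False) ->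
  (forall i, continuous TX TY (h i)) ->
  forall m, exists G, continuous TX TY G /\ forall i x, (i <= m)%nat -> M i x -> G x = h i x.
Proof.
  intros Hg Hg0 Hg1 M h HM Hdis Hh m. induction m.
  - exists (h 0%nat); split; auto. intros i x Hi _. replace i with 0%nat by lia; auto.
  - destruct IHm as [G [HG HGe]].
    destruct (merge TX Hn TY g Hg Hg0 Hg1 (fun x => exists j, (j < S m)%nat /\ M j x) (M (S m)) G (h (S m)))
      as [G' [HG' [HA HB]]]; auto.
    + apply closed_fin_union; auto.
    + intros x [[j [Hj Mj]] Ms]. apply (Hdis j (S m) x); auto; lia.
    + exists G'; split; auto. intros i x Hi Mi.
      destruct (Nat.eq_dec i (S m)) as [-> | Hne]; auto.
      rewrite HA by (exists i; split; [lia | auto]). apply HGe; auto; lia.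
Qed.

Definition incl {X} (E : X -> Prop) (En : nat -> X -> Prop) (HE : forall x, E x <-> exists n, En n x)
  n (a : {x | En n x}) : {x | E x} :=
  exist _ (proj1_sig a) (proj2 (HE _) (ex_intro _ n (proj2_sig a))).

Lemma incl_cont {X} (TX : topology X) E En HE n (f : X -> {x | En n x}) :
  continuous TX (subspace TX (En n)) f ->
  continuous TX (subspace TX E) (fun x => incl E En HE n (f x)).
Proof.
  intros Hf V HV. simpl in HV. destruct HV as [U [HU HUV]].
  apply open_ext with (fun x => (fun b : {x | En n x} => U (proj1_sig b)) (f x)).
  - intro x. rewrite (HUV (incl E En HE n (f x))). simpl. tauto.
  - apply (Hf (fun b : {x | En n x} => U (proj1_sig b))). simpl. exists U; split; auto. tauto.
Qed.

Lemma incl_conv {X} (TX : topology X) E En HE n (u : nat -> {x | En n x}) y :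
  seq_converges (subspace TX (En n)) u y ->
  seq_converges (subspace TX E) (fun k => incl E En HE n (u k)) (incl E En HE n y).
Proof.
  intros Hu V HV Vy. simpl in HV. destruct HV as [U [HU HUV]].
  destruct (Hu (fun b : {x | En n x} => U (proj1_sig b))) as [N HN].
  - simpl. exists U; split; auto; tauto.
  - simpl. apply (HUV (incl E En HE n y)) in Vy. exact Vy.
  - exists N; intros k Hk. apply HUV. simpl. apply HN; auto.
Qed.

Theorem theorem2p6 (X : Type) (TX : topology X) (E : X -> Prop)
  (En : nat -> X -> Prop) :
  perfectly_normal TX ->
  equiconnected (subspace TX E) ->
  (forall x, E x <-> exists n, En n x) ->
  (forall n m, n <> m -> forall x, ~ (En n x /\ En m x)) ->
  (forall n, ambiguous (subspace TX E) (fun e : {x | E x} => En n (proj1_sig e))) ->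
  (forall n, B1_retract TX (En n)) ->
  G_delta TX E ->
  B1_retract TX E.
Proof.
  intros [Hn Hpn] [g [Hg Hgp]] HE Hdisj Hamb HB1 [Gd [HGo HGE]].
  assert (Hg0 : forall y1 y2 t, proj1_sig t = 0 -> g (y1, y2, t) = y1) by (intros; apply Hgp; auto).
  assert (Hg1 : forall y1 y2 t, proj1_sig t = 1 -> g (y1, y2, t) = y2) by (intros; apply Hgp; auto).
  destruct (choice_dep _ HB1) as [R HR].
  assert (Hf : forall n, exists fk : nat -> X -> {x | En n x},
    (forall k, continuous TX (subspace TX (En n)) (fk k)) /\
    forall x, seq_converges (subspace TX (En n)) (fun k => fk k x) (R n x)).
  { intro n; destruct (HR n) as [[fk Hfk] _]; exists fk; auto. }
  destruct (choice_dep _ Hf) as [fn Hfn].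
  assert (HU : forall n, exists Uk : nat -> X -> Prop, (forall k, is_open TX (Uk k)) /\
      forall x, E x -> (En n x <-> exists k, ~ Uk k x)).
  { intro n. destruct (Hamb n) as [[F [HFc HFe]] _].
    assert (HFk : forall k, exists U, is_open TX U /\ forall a, ~ F k a <-> U (proj1_sig a)).
    { intro k. exact (HFc k). }
    destruct (choice_cid _ HFk) as [Uk HUk].
    exists Uk; split; [intro k; apply HUk|].
    intros x Ex. rewrite (HFe (exist _ x Ex)). simpl. split.
    - intros [k Fk]; exists k; intro Uc. apply (proj2 (proj2 (HUk k) (exist _ x Ex))); auto.
    - intros [k nU]; exists k. apply NNPP; intro nF. apply nU. apply (proj2 (HUk k) (exist _ x Ex)); auto. }
  destruct (choice_cid _ HU) as [Uc HUc].
  set (Qp := fun p : nat * nat => match fst p with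
             | O => fun x => ~ Gd (snd p) x
             | S n => fun x => ~ Uc n (snd p) x end).
  set (Q := fun i => Qp (Cantor.of_nat i)).
  assert (HQc : forall i, closed TX (Q i)).
  { intro i. unfold Q, Qp. destruct (Cantor.of_nat i) as [[|n] k]; simpl; apply open_compl; auto.
    apply HUc. }
  assert (Hcov : forall x, exists i, Q i x).
  { intro x. destruct (classic (E x)) as [Ex | nEx].
    - destruct (proj1 (HE x) Ex) as [n Hn'].
      destruct (proj1 (proj2 (HUc n) x Ex) Hn') as [k Hk].
      exists (Cantor.to_nat (S n, k)). unfold Q. rewrite Cantor.cancel_of_to. exact Hk.
    - assert (~ forall k, Gd k x) by (intro H; apply nEx, HGE; auto).
      apply not_all_ex_not in H as [k Hk].
      exists (Cantor.to_nat (0%nat, k)). unfold Q. rewrite Cantor.cancel_of_to. exact Hk. }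
  (* complements of the earlier pieces are F_sigma *)
  assert (HW : forall i, exists W : nat -> X -> Prop, (forall j, is_open TX (W j)) /\
      forall x, (exists l, (l < i)%nat /\ Q l x) <-> forall j, W j x).
  { intro i. apply Hpn. apply closed_fin_union; auto. }
  destruct (choice_cid _ HW) as [W HWp].
  assert (Hidx : forall x, exists i, Q i x /\ forall l, (l < i)%nat -> ~ Q l x).
  { intro x; apply exists_least; auto. }
  destruct (choice_cid _ Hidx) as [idx Hidxp].
  set (nn := fun i => Nat.pred (fst (Cantor.of_nat i))).
  set (h := fun i k x => incl E En HE (nn i) (fn (nn i) k x)).
  set (hl := fun i x => incl E En HE (nn i) (R (nn i) x)).
  assert (HG : forall k, exists G, continuous TX (subspace TX E) G /\
     forall i x, (i <= k)%nat -> (Q i x /\ exists j, (j < k)%nat /\ ~ W i j x) -> G x = h i k x).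
  { intro k. apply (glue_fin TX Hn (subspace TX E) g Hg Hg0 Hg1
      (fun i x => Q i x /\ exists j, (j < k)%nat /\ ~ W i j x) (fun i => h i k)).
    - intro i. apply closed_inter2; auto.
      apply closed_fin_union. intro j. apply open_compl, HWp.
    - assert (Hd : forall i j x, (i < j)%nat -> Q i x -> (exists j0, (j0 < k)%nat /\ ~ W j j0 x) -> False).
      { intros i j x Hij Qi [j0 [_ Wj]]. apply Wj. apply (proj1 (proj2 (HWp j) x)). exists i; auto. }
      intros i j x Hne [Qi Hi] [Qj Hj]. destruct (Nat.lt_total i j) as [Hlt | [Heq | Hgt]].
      + eapply Hd; eauto.
      + auto.
      + eapply Hd; eauto.
    - intro i. unfold h. apply incl_cont. apply Hfn. }
  destruct (choice_cid _ HG) as [G HGp].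
  exists (fun x => hl (idx x) x). split.
  - exists G. split; [intro k; apply HGp|].
    intro x. destruct (Hidxp x) as [Qi Hmin]. set (i := idx x) in *.
    assert (nZ : ~ forall j, W i j x).
    { intro H. apply (proj2 (proj2 (HWp i) x)) in H. destruct H as [l [Hl Ql]]. apply (Hmin l); auto. }
    apply not_all_ex_not in nZ as [j0 Hj0].
    intros V HV Vr.
    destruct (incl_conv TX E En HE (nn i) (fun k => fn (nn i) k x) (R (nn i) x) (proj2 (Hfn (nn i)) x) V HV Vr)
      as [N HN].
    exists (Nat.max N (Nat.max i (S j0))). intros k Hk.
    rewrite (proj2 (HGp k) i x); [apply HN; lia | lia |].
    split; auto. exists j0; split; [lia | auto].
  - intros [x Ex]. simpl. destruct (Hidxp x) as [Qi _]. set (i := idx x) in *.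
    unfold hl, nn. unfold Q, Qp in Qi. destruct (Cantor.of_nat i) as [[|n] k]; simpl in Qi |- *.
    + exfalso; apply Qi. apply HGE; auto.
    + assert (HEn : En n x) by (apply (proj2 (HUc n) x Ex); exists k; auto).
      assert (HRx : R n x = exist _ x HEn) by exact (proj2 (HR n) (exist _ x HEn)).
      rewrite HRx. unfold incl; simpl. f_equal. apply proof_irrelevance.
Qed.
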